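(* Let $n>2k-t$, $k>t+1$, $q\geq 3$ and $k<2t+2$. Then \[\left[{n-t-2\atop k-t-2}\right]_q\left(1+\theta_{t+2}q^{k-t-1}\frac{q^{n-k}-1}{q^{k-t-1}-1}\right)>\theta_{k+1}-\theta_{k-t}+\left[{n-t\atop k-t}\right]_q-q^{(k-t+1)(k-t)}\left[{n-k-1\atop k-t}\right]_q,\] i.e. in $\mathrm{PG}(n,q)$ the set of all $k$-spaces meeting a fixed $(t+2)$-space in at least a $(t+1)$-space is larger than the set consisting of all $k$-spaces in $\langle\pi,\delta\rangle$ together with all $k$-spaces through $\delta$ meeting $\langle\pi,\delta\rangle$ in at least a $(t+1)$-space (for a $t$-space $\delta$ and $k$-space $\pi$ with $\dim(\pi\cap\delta)=t-1$).
   Context: $\left[{n\atop k}\right]_q=\frac{(q^n-1)\cdots(q^{n-k+1}-1)}{(q^k-1)\cdots(q-1)}$ for $k>0$, $=1$ for $k=0$; $\theta_m=\frac{q^{m+1}-1}{q-1}$; $q$ is a prime power; dimensions are projective. *)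

(* Defs.v *)
From mathcomp Require Import all_boot all_order all_algebra.
Set Implicit Arguments. Unset Strict Implicit. Unset Printing Implicit Defensive.
Import Order.TTheory GRing.Theory Num.Theory.
Local Open Scope ring_scope.

Definition is_prime_power (q : nat) : Prop :=
  exists p e : nat, prime p /\ (0 < e)%N /\ q = (p ^ e)%N.

Definition qbinom (q : rat) (n k : nat) : rat :=
  if k == 0%N then 1
  else (\prod_(i < k) (q ^+ (n - i) - 1)) / (\prod_(i < k) (q ^+ i.+1 - 1)).

Definition theta (q : rat) (m : nat) : rat := (q ^+ m.+1 - 1) / (q - 1).

(* Main.v *)
Require Import Defs.
From mathcomp Require Import all_boot all_order all_algebra.
From mathcomp Require Import ring lra zify.
Import Order.TTheory GRing.Theory Num.Theory.
Local Open Scope ring_scope.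


Lemma qA (x : rat) M r : qbinom x M.+1 r.+1 = qbinom x M r * (x ^+ M.+1 - 1) / (x ^+ r.+1 - 1).
Proof.
rewrite /qbinom /= big_ord_recl big_ord_recr /=.
have E : \prod_(i < r) (x ^+ (M.+1 - bump 0 i) - 1) = \prod_(i < r) (x ^+ (M - i) - 1).
  by apply: eq_bigr => i _; rewrite /bump /= add1n subSS.
rewrite E subn0; case: ifP => [/eqP->|_]; rewrite ?big_ord0 invfM ?invr1.
  move: (x ^+ M.+1 - 1) (x ^+ 1 - 1) => c d; ring.
move: (\prod_(i < r) _) (\prod_(i < r) _) (x ^+ M.+1 - 1) (x ^+ r.+1 - 1) => a b c d.
ring.
Qed.

Lemma qB (x : rat) M r : qbinom x M r.+1 = qbinom x M r * (x ^+ (M - r) - 1) / (x ^+ r.+1 - 1).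
Proof.
rewrite /qbinom /= big_ord_recr big_ord_recr /=.
case: ifP => [/eqP->|_]; rewrite ?big_ord0 invfM ?invr1.
  rewrite subn0; move: (x ^+ (M - 0) - 1) (x ^+ 1 - 1) => c d; ring.
move: (\prod_(i < r) _) (\prod_(i < r) _) (x ^+ (M - r) - 1) (x ^+ r.+1 - 1) => a b c d.
ring.
Qed.

Lemma pow_gt1 (x : rat) n : 1 < x -> 1 < x ^+ n.+1.
Proof. by move=> hx; rewrite exprn_egt1. Qed.

Lemma qpascal (x : rat) M r : 1 < x -> (r <= M)%N ->
  qbinom x M.+1 r.+1 = qbinom x M r + x ^+ r.+1 * qbinom x M r.+1.
Proof.
move=> hx /subnKC <-; set e := (M - r)%N.
rewrite qA qB addKn -addSn exprD.
have h : x ^+ r.+1 - 1 != 0 by rewrite subr_eq0 gt_eqF // pow_gt1.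
move: h; move: (x ^+ r.+1) (x ^+ e) (qbinom x (r + e) r) => y z P h.
field.
by [].
Qed.

Lemma qnn (x : rat) M r : 1 <= x -> 0 <= qbinom x M r.
Proof.
move=> hx; rewrite /qbinom; case: ifP => _ //.
apply: divr_ge0; apply: prodr_ge0 => i _; rewrite subr_ge0; exact: exprn_ege1.
Qed.

Lemma qge1 (x : rat) r d : 1 < x -> 1 <= qbinom x (r + d) r.
Proof.
move=> hx; elim: r => [|r IH]; first by rewrite /qbinom.
rewrite addSn qA.
have h : 1 <= (x ^+ (r + d).+1 - 1) / (x ^+ r.+1 - 1).
  have hp : 0 < x ^+ r.+1 - 1 by rewrite subr_gt0 pow_gt1.
  rewrite ler_pdivlMr // mul1r lerD2r ler_eXn2l //; lia.
rewrite -mulrA; move: h IH; move: (qbinom x (r + d) r) ((x ^+ (r + d).+1 - 1) / (x ^+ r.+1 - 1)) => a b.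
nra.
Qed.

Lemma qL (x : rat) M r j : 1 < x -> (r <= M)%N ->
  x ^+ (r * j) * qbinom x M r <= qbinom x (M + j) r.
Proof.
move=> hx; case: r => [|r] hr.
  by rewrite /qbinom /= mul0n expr0 mul1r.
elim: j => [|j IH]; first by rewrite muln0 expr0 mul1r addn0.
rewrite addnS qpascal //; last by lia.
rewrite mulnS exprD.
have h1 := qnn x (M + j)%N r (ltW hx).
have h2 : 0 <= x ^+ r.+1 by rewrite exprn_ge0 // ltW // (lt_trans ltr01).
move: IH h1 h2; move: (x ^+ r.+1) (x ^+ (r.+1 * j)) (qbinom x M r.+1) (qbinom x (M + j) r.+1) (qbinom x (M + j) r) => a b c d e.
nra.
Qed.

Lemma qD (x : rat) r j M : 1 < x -> (r <= M)%N ->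
  qbinom x (M + j).+1 r.+1 - x ^+ (r.+1 * j.+1) * qbinom x M r.+1
    <= (x ^+ j.+1 - 1) / (x - 1) * qbinom x (M + j) r.
Proof.
move=> hx; elim: j M => [|j IH] M hr.
  rewrite addn0 muln1 qpascal // divff ?mul1r ?expr1; last by rewrite subr_eq0 gt_eqF.
  by rewrite addrK.
have IH' := IH M.+1 (leqW hr).
have hP := qpascal x M r hx hr.
have hL := qL x M r j.+1 hx hr.
rewrite addSnnS in IH'.
rewrite hP in IH'.
have e1 : x ^+ (r.+1 * j.+2) = x ^+ (r.+1 * j.+1) * x ^+ r.+1 by rewrite -exprD mulnS addnC.
have e2 : x ^+ (r.+1 * j.+1) = x ^+ j.+1 * x ^+ (r * j.+1) by rewrite -exprD mulSn.
have e3 : (x ^+ j.+2 - 1) / (x - 1) = (x ^+ j.+1 - 1) / (x - 1) + x ^+ j.+1.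
  have h : x - 1 != 0 by rewrite subr_eq0 gt_eqF.
  rewrite exprS; move: h; move: (x ^+ j.+1) => y h; field.
  by [].
rewrite e1 e2 e3; rewrite e2 in IH'.
have hU : 0 <= x ^+ j.+1 by rewrite exprn_ge0 // ltW // (lt_trans ltr01).
move: IH' hL hU.
move: (qbinom x (M + j.+1).+1 r.+1) (x ^+ j.+1) (x ^+ (r * j.+1)) (x ^+ r.+1) (qbinom x M r) (qbinom x M r.+1) ((x ^+ j.+1 - 1) / (x - 1)) (qbinom x (M + j.+1) r).
move=> T U V X Pm Q1 S B.
nra.
Qed.

Lemma keyK (x : rat) a b c : 3 <= x ->
  theta x (a + a + 4 + b) - theta x (a + 2) <
  1 + theta x (a + 3 + b) * x ^+ (a + 1) * ((x ^+ (a + 3 + c) - 1) / (x ^+ (a + 1) - 1))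
    - (x ^+ (a + 3) - 1) / (x - 1) * ((x ^+ (a + a + 4 + c) - 1) / (x ^+ (a + 1) - 1)).
Proof.
move=> hx; rewrite /theta.
have hA : 1 <= x ^+ a by rewrite exprn_ege1 // (le_trans _ hx).
have hB : 1 <= x ^+ b by rewrite exprn_ege1 // (le_trans _ hx).
have hC : 1 <= x ^+ c by rewrite exprn_ege1 // (le_trans _ hx).
rewrite !exprS !exprD.
move: hA hB hC; move: (x ^+ a) (x ^+ b) (x ^+ c) => A B C hA hB hC.
rewrite -subr_gt0.
have h1 : x - 1 != 0 by apply/eqP => h; lra.
have h2 : A * x - 1 != 0 by apply/eqP => h; nra.
have -> : forall y : rat, y ^+ 1 = y by move=> y; rewrite expr1.
set D := (x - 1) * (A * x - 1) + A^+3*B*C*x^+8 - A^+3*C*x^+7 - A^+3*B*x^+6 + A*x + A^+2*x^+4 - 1.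
have hD : 0 < D / ((x - 1) * (A * x - 1)).
  apply: divr_gt0; last first.
    apply: mulr_gt0; [lra | nra].
  have e1 : 0 <= B * C * x ^+ 2 - C * x - B.
    have f1 : 0 <= (B - 1) * C * x by apply: mulr_ge0; [apply: mulr_ge0|]; lra.
    have f2 : 0 <= (C - 1) * B by apply: mulr_ge0; lra.
    have f3 : 0 <= B * C * (x * x - x - 1) by apply: mulr_ge0; [apply: mulr_ge0|]; nra.
    rewrite expr2; nra.
  have e2 : 0 <= A ^+ 3 * x ^+ 6 by apply: mulr_ge0; apply: exprn_ge0; lra.
  have e3 : 0 <= (x - 1) * (A * x - 1) by apply: mulr_ge0; nra.
  have e4 : 0 < A ^+ 2 * x ^+ 4 by apply: mulr_gt0; apply: exprn_gt0; lra.
  have -> : D = A ^+ 3 * x ^+ 6 * (B * C * x ^+ 2 - C * x - B) + (x - 1) * (A * x - 1) + (A * x - 1) + A ^+ 2 * x ^+ 4.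
    rewrite /D; ring.
  have : 0 <= A ^+ 3 * x ^+ 6 * (B * C * x ^+ 2 - C * x - B) by apply: mulr_ge0.
  nra.
apply: (lt_le_trans hD); rewrite le_eqVlt; apply/orP; left; apply/eqP; rewrite /D; field.
by rewrite h1 h2.
Qed.

Theorem mainTheorem16 (q n k t : nat)
  (hq : is_prime_power q) (hq3 : (3 <= q)%N)
  (hn : (2 * k < n + t)%N) (hk1 : (t.+1 < k)%N) (hk2 : (k < 2 * t + 2)%N) :
  let Q : rat := q%:R in
  qbinom Q (n - t - 2) (k - t - 2)
    * (1 + theta Q (t + 2) * Q ^+ (k - t - 1)
           * ((Q ^+ (n - k) - 1) / (Q ^+ (k - t - 1) - 1)))
  > theta Q (k + 1) - theta Q (k - t) + qbinom Q (n - t) (k - t)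
    - Q ^+ ((k - t + 1) * (k - t)) * qbinom Q (n - k - 1) (k - t).
Proof.
cbv zeta. set Q : rat := q%:R.
have hx3 : 3 <= Q by rewrite /Q (ler_nat _ 3 q).
have hx : 1 < Q by lra.
have [a [b [c [et [ek en]]]]] : exists a b c, [/\ t = (a + 1 + b)%N, k = (a + a + 3 + b)%N & n = (a + a + a + 6 + b + c)%N].
  exists (k - t - 2)%N, (t - (k - t - 2) - 1)%N, (n - k - (k - t - 2) - 3)%N; split; lia.
subst t k n.
have -> : (a + a + a + 6 + b + c - (a + 1 + b) - 2 = a + 1 + c + (a + 2))%N by lia.
have -> : (a + a + 3 + b - (a + 1 + b) - 2 = a)%N by lia.
have -> : (a + 1 + b + 2 = a + 3 + b)%N by lia.
have -> : (a + a + 3 + b - (a + 1 + b) - 1 = a + 1)%N by lia.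
have -> : (a + a + a + 6 + b + c - (a + a + 3 + b) - 1 = a + 2 + c)%N by lia.
have -> : (a + a + a + 6 + b + c - (a + a + 3 + b) = a + 3 + c)%N by lia.
have -> : (a + a + 3 + b + 1 = a + a + 4 + b)%N by lia.
have -> : (a + a + 3 + b - (a + 1 + b) = (a + 1).+1)%N by lia.
have -> : (a + a + a + 6 + b + c - (a + 1 + b) = (a + 2 + c + (a + 2)).+1)%N by lia.
have -> : (((a + 1).+1 + 1) * (a + 1).+1 = (a + 1).+1 * (a + 2).+1)%N by nia.
have hD := qD Q (a + 1) (a + 2) (a + 2 + c) hx ltac:(lia).
have hA := qA Q (a + 1 + c + (a + 2)) a.
have e1 : ((a + 1 + c + (a + 2)).+1 = a + 2 + c + (a + 2))%N by lia.
have e2 : (a + 2 + c + (a + 2) = (a + 1 + c + (a + 2)).+1)%N by lia.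
rewrite e1 in hA.
have e3 : (a.+1 = a + 1)%N by lia.
rewrite e3 in hA; rewrite hA in hD.
have hP := qge1 Q a (a + 1 + c + 2) hx.
have e4 : (a + (a + 1 + c + 2) = a + 1 + c + (a + 2))%N by lia.
rewrite e4 in hP.
have hK := keyK Q a b c hx3.
have e5 : (a + 2).+1 = (a + 3)%N by lia.
have e6 : Q ^+ (a + 2 + c + (a + 2)) = Q ^+ (a + a + 4 + c) by congr (_ ^+ _); lia.
rewrite e6 in hD; rewrite e5 in hD |- *.
have e7 : (a + 1).+1 = (a + 2)%N by lia.
rewrite e7.
rewrite e7 in hD.
have hE : 0 <= theta Q (a + a + 4 + b) - theta Q (a + 2).
  rewrite /theta -mulrBl; apply: divr_ge0; last lra.
  rewrite subr_ge0 lerD2r ler_eXn2l //; lia.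
have eR : forall th P V w : rat, th * (P * V / w) = P * (th * (V / w)) by move=> *; ring.
rewrite eR in hD.
move: hD hK hP hE.
move: (qbinom Q (a + 1 + c + (a + 2)) a) => P.
move: (theta Q (a + a + 4 + b) - theta Q (a + 2)) => E.
move: (theta Q (a + 3 + b) * Q ^+ (a + 1) * ((Q ^+ (a + 3 + c) - 1) / (Q ^+ (a + 1) - 1))) => T.
move: ((Q ^+ (a + 3) - 1) / (Q - 1)) ((Q ^+ (a + a + 4 + c) - 1)) (Q ^+ (a + 1) - 1) => th V w.
move: (th * (V / w)) (qbinom Q (a + 2 + c + (a + 2)).+1 (a + 2)) (Q ^+ ((a + 2) * (a + 3)) * qbinom Q (a + 2 + c) (a + 2)) => Z Bg X.
nra.
Qed.
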